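(* Let $(V,\mathcal H,\iota,W)$ be an abelian generalized functional theory with set of weights $\Omega$. Then $\iota^*(\mathcal P)=\iota^*(\mathcal E)=\mathrm{conv}(\Omega)$.
   Context: A generalized functional theory is a tuple $(V,\mathcal H,\iota,W)$ with $V$ a finite-dimensional real vector space, $\mathcal H$ a finite-dimensional complex Hilbert space, $\iota:V\to i\mathfrak u(\mathcal H)$ a linear map into the Hermitian operators, and $W$ Hermitian. States are regarded as linear functionals on $i\mathfrak u(\mathcal H)$ via the trace; $\iota^*$ is the dual map, $\langle\iota^*(\Gamma),v\rangle=\mathrm{Tr}(\Gamma\iota(v))$. $\mathcal P$ is the set of pure states (rank-one orthogonal projectors) and $\mathcal E$ the set of density operators. The theory is abelian if $[\iota(v),\iota(v')]=0$ for all $v,v'$. A weight is an $\alpha\in V^*$ for which there is a nonzero $\psi\in\mathcal H$ with $\iota(v)\psi=\langle\alpha,v\rangle\psi$ for all $v\in V$; $\Omega$ is the set of weights. *)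

(* Defs.v *)
From HB Require Import structures.
From mathcomp Require Import all_boot all_order all_algebra.
From mathcomp Require Import complex.
Set Implicit Arguments. Unset Strict Implicit. Unset Printing Implicit Defensive.
Import Order.TTheory GRing.Theory Num.Theory.
Local Open Scope ring_scope.
Local Open Scope complex_scope.

(* Hilbert space H = C^n (column vectors), operators = n x n complex matrices. *)
Definition adj (R : rcfType) (n p : nat) (A : 'M[R[i]]_(n, p)) : 'M[R[i]]_(p, n) :=
  (map_mx (@conjc R) A)^T.

Definition is_hermitian (R : rcfType) (n : nat) (A : 'M[R[i]]_n) : Prop :=
  adj A = A.

(* The real vector space V is R^m (row vectors), V* is identified with R^m via
   the standard pairing <alpha, v> = sum_k alpha_k v_k. *)
Definition pairing (R : rcfType) (m : nat) (alpha v : 'rV[R]_m) : R :=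
  \sum_(k < m) alpha 0 k * v 0 k.

(* A linear map iota : V -> iu(H) is given by the images X k of the standard
   basis vectors: iota v = sum_k v_k X_k. *)
Definition iota (R : rcfType) (m n : nat) (X : 'I_m -> 'M[R[i]]_n)
  (v : 'rV[R]_m) : 'M[R[i]]_n :=
  \sum_(k < m) (v 0 k)%:C *: X k.

(* Dual map: <iota^*(G), v> = Tr(G iota(v)); its coordinates are Tr(G X_k)
   (real for is_hermitian G). *)
Definition iota_star (R : rcfType) (m n : nat) (X : 'I_m -> 'M[R[i]]_n)
  (G : 'M[R[i]]_n) : 'rV[R]_m :=
  \row_(k < m) @complex.Re R (\tr (G *m X k)).

Definition pure_state (R : rcfType) (n : nat) (P : 'M[R[i]]_n) : Prop :=
  is_hermitian P /\ P *m P = P /\ \rank P = 1%N.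

Definition density_operator (R : rcfType) (n : nat) (G : 'M[R[i]]_n) : Prop :=
  is_hermitian G /\ (forall x : 'cV[R[i]]_n, 0 <= (adj x *m G *m x) 0 0)
  /\ \tr G = 1.

Definition abelian_theory (R : rcfType) (m n : nat) (X : 'I_m -> 'M[R[i]]_n) :
  Prop := forall v v' : 'rV[R]_m, iota X v *m iota X v' = iota X v' *m iota X v.

Definition weight (R : rcfType) (m n : nat) (X : 'I_m -> 'M[R[i]]_n)
  (alpha : 'rV[R]_m) : Prop :=
  exists psi : 'cV[R[i]]_n, psi != 0 /\
    forall v : 'rV[R]_m, iota X v *m psi = (pairing alpha v)%:C *: psi.

Definition conv (R : rcfType) (m : nat) (S : 'rV[R]_m -> Prop) (x : 'rV[R]_m)
  : Prop :=
  exists (k : nat) (p : 'I_k -> 'rV[R]_m) (t : 'I_k -> R),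
    (forall j, S (p j)) /\ (forall j, 0 <= t j) /\ \sum_(j < k) t j = 1 /\
    x = \sum_(j < k) t j *: p j.

(* Main.v *)
Require Import Defs.
From mathcomp Require Import all_boot all_order all_algebra.
From mathcomp Require Import complex spectral sesquilinear.
Import Order.TTheory GRing.Theory Num.Theory.
Local Open Scope ring_scope.
Local Open Scope complex_scope.

Lemma adjE (R : rcfType) n p (A : 'M[R[i]]_(n,p)) : adj A = (A ^t (@Num.conj _))%sesqui.
Proof. by rewrite /adj map_trmx. Qed.

Lemma adjM (R : rcfType) n p q (A : 'M[R[i]]_(n,p)) (B : 'M[R[i]]_(p,q)) :
  adj (A *m B) = adj B *m adj A.
Proof. by rewrite /adj map_mxM trmx_mul. Qed.

Lemma adjK (R : rcfType) n p (A : 'M[R[i]]_(n,p)) : adj (adj A) = A.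
Proof. by apply/matrixP => i j; rewrite /adj !mxE conjcK. Qed.

Lemma adjE' (R : rcfType) n p (A : 'M[R[i]]_(n,p)) i j : adj A i j = conjc (A j i).
Proof. by rewrite /adj !mxE. Qed.

Lemma iota_delta (R : rcfType) m n (X : 'I_m -> 'M[R[i]]_n) k :
  Defs.iota X (delta_mx 0 k) = X k.
Proof.
rewrite /Defs.iota (bigD1 k) //= big1 ?addr0; first by rewrite mxE !eqxx /= scale1r.
move=> l /negbTE lk; rewrite mxE /=; by rewrite lk ?andbF /= ?rmorph0 ?scale0r.
Qed.

Lemma pairing_delta (R : rcfType) m (a : 'rV[R]_m) k :
  pairing a (delta_mx 0 k) = a 0 k.
Proof.
rewrite /pairing (bigD1 k) //= big1 ?addr0; first by rewrite mxE !eqxx /= mulr1.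
move=> l /negbTE lk; rewrite mxE /=; by rewrite lk ?andbF /= ?mulr0.
Qed.

Lemma diag_basis (R : rcfType) m n (X : 'I_m -> 'M[R[i]]_n) :
  (forall k, is_hermitian (X k)) -> abelian_theory X ->
  exists (U : 'M[R[i]]_n) (lam : 'I_m -> 'I_n -> R),
   [/\ U *m adj U = 1%:M, adj U *m U = 1%:M &
   forall k, X k = adj U *m diag_mx (\row_j (lam k j)%:C) *m U].
Proof.
move=> Xh Xab.
have [] := @cotrigonalization _ n [seq X k | k <- enum 'I_m].
  move=> _ _ /mapP[k _ ->] /mapP[l _ ->].
  by rewrite /comm_mx -!iota_delta Xab.
move=> U Uu /allP Utr.
have UU : U *m adj U = 1%:M by rewrite adjE; apply/unitarymxP.
have UU' : adj U *m U = 1%:M.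
  by rewrite adjE -invmx_unitary // mulVmx // unitarymx_unit.
pose D k := U *m X k *m adj U.
have Dh k : adj (D k) = D k by rewrite /D !adjM adjK Xh mulmxA.
have Dtr k (i j : 'I_n) : (i < j)%N -> D k i j = 0.
  have := Utr (X k) (map_f _ (mem_enum _ k)).
  rewrite /= /similar_to conjymx // -adjE => /is_trig_mxP; exact.
have Ddiag k (i j : 'I_n) : i != j -> D k i j = 0.
  case: (ltngtP i j) => [ij|ji|/val_inj->]; last by rewrite eqxx.
  - by rewrite Dtr.
  - by rewrite -Dh adjE' Dtr // conjc0.
  exists U, (fun k j => @complex.Re R (D k j j)); split => // k.
have -> : X k = adj U *m D k *m U by rewrite /D !mulmxA UU' mul1mx -!mulmxA UU' mulmx1.
clearbody D.
congr (_ *m _ *m _); apply/matrixP => i j; rewrite !mxE.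
case: (eqVneq i j) => [<-|ij]; last by rewrite (Ddiag k i j ij) /= mulr0n.
rewrite mulr1n; have := Dh k => /matrixP /(_ i i); rewrite adjE'.
by case: (D k i i) => a b /= [] /eqP; rewrite -subr_eq0 -opprD oppr_eq0 -mulr2n mulrn_eq0 /= => /eqP->.
Qed.

Lemma diag_delta (R : rcfType) n (d : 'rV[R[i]]_n) j :
  diag_mx d *m delta_mx j 0 = d 0 j *: delta_mx j (0 : 'I_1).
Proof.
apply/matrixP => a b; rewrite mul_diag_mx !mxE.
by case: (eqVneq a j) => [->|]; rewrite ?mulr0 ?mulr1 //= mulr0.
Qed.

Lemma eigvec (R : rcfType) m n (X : 'I_m -> 'M[R[i]]_n) (U : 'M[R[i]]_n) (lam : 'I_m -> 'I_n -> R) :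
  U *m adj U = 1%:M ->
  (forall k, X k = adj U *m diag_mx (\row_j (lam k j)%:C) *m U) ->
  forall k j, X k *m (adj U *m delta_mx j (0 : 'I_1)) =
     (lam k j)%:C *: (adj U *m delta_mx j (0 : 'I_1)).
Proof.
move=> UU HX k j; rewrite HX -!mulmxA (mulmxA U) UU mul1mx diag_delta.
by rewrite -scalemxAr mxE.
Qed.

Lemma delta_neq0 (R : rcfType) n (j : 'I_n) (z : 'I_1) : delta_mx j z != 0 :> 'cV[R[i]]_n.
Proof.
apply/eqP => /matrixP /(_ j z); rewrite !mxE !eqxx /= => /eqP.
by rewrite oner_eq0.
Qed.

Lemma weight_lam (R : rcfType) m n (X : 'I_m -> 'M[R[i]]_n) (U : 'M[R[i]]_n) (lam : 'I_m -> 'I_n -> R) :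
  U *m adj U = 1%:M ->
  (forall k, X k = adj U *m diag_mx (\row_j (lam k j)%:C) *m U) ->
  forall j, weight X (\row_k lam k j).
Proof.
move=> UU HX j; exists (adj U *m delta_mx j (0 : 'I_1)); split.
  apply/eqP => H0; have := @delta_neq0 R n j 0.
  have := congr1 (mulmx U) H0; rewrite mulmxA UU mul1mx mulmx0 => ->.
  by rewrite eqxx.
move=> v; rewrite /Defs.iota mulmx_suml /pairing rmorph_sum scaler_suml.
apply: eq_bigr => k _; rewrite -scalemxAl (@eigvec R m n X U lam UU HX) scalerA mxE.
by rewrite rmorphM mulrC.
Qed.

Lemma weight_is_lam (R : rcfType) m n (X : 'I_m -> 'M[R[i]]_n) (U : 'M[R[i]]_n) (lam : 'I_m -> 'I_n -> R) :
  U *m adj U = 1%:M -> adj U *m U = 1%:M ->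
  (forall k, X k = adj U *m diag_mx (\row_j (lam k j)%:C) *m U) ->
  forall a, weight X a -> exists j, a = \row_k lam k j.
Proof.
move=> UU UU' HX a [psi [psi0 Hpsi]].
have Hk k : X k *m psi = (a 0 k)%:C *: psi.
  by rewrite -iota_delta Hpsi pairing_delta.
pose phi := U *m psi.
have phi0 : phi != 0.
  apply: contra psi0 => /eqP H.
  by rewrite -(mul1mx psi) -UU' -mulmxA -/phi H mulmx0.
have [j Hj] : exists j, phi j 0 != 0.
  case/boolP: [exists j, phi j 0 != 0] => [/existsP//|/existsPn H].
  case/eqP: phi0; apply/matrixP => i z; rewrite ord1 [RHS]mxE.
  by have /negPn/eqP := H i.
exists j; apply/rowP => k; rewrite mxE.
have UX : U *m X k = diag_mx (\row_j (lam k j)%:C) *m U.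
  by rewrite HX !mulmxA UU mul1mx.
have := congr1 (fun M : 'cV[R[i]]_n => M j 0) (congr1 (mulmx U) (Hk k)).
rewrite /= mulmxA UX -mulmxA -/phi -scalemxAr -/phi mul_diag_mx !mxE.
move: Hj; rewrite mxE => Hj.
by move/(mulIf Hj)/complexI/esym.
Qed.

Lemma psd_adj (R : rcfType) n (y : 'cV[R[i]]_n) : 0 <= (adj y *m y) 0 0.
Proof.
rewrite mxE; apply: sumr_ge0 => i _; rewrite adjE' mulrC.
exact: mul_conjC_ge0.
Qed.

Lemma pure_density (R : rcfType) n (P : 'M[R[i]]_n) :
  pure_state P -> density_operator P.
Proof.
case=> [Ph [PP Pr]]; split => //; split.
  move=> x; have -> : adj x *m P *m x = adj (P *m x) *m (P *m x).
    by rewrite adjM Ph !mulmxA -(mulmxA _ P P) PP.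
  exact: psd_adj.
pose a := col_base P; pose b := row_base P.
have ab : a *m b = P := mulmx_base P.
have fb : row_free b := row_base_free P.
have fa : row_free a^T by rewrite /row_free mxrank_tr; exact: col_base_full.
clearbody a b.
have H : a *m (b *m a) *m b = a *m 1%:M *m b.
  by rewrite mulmx1 !mulmxA ab -mulmxA ab PP.
have H2 := row_free_inj fb H.
have ba : b *m a = 1%:M.
  apply: trmx_inj; apply: (row_free_inj fa).
  by rewrite /= -!trmx_mul H2.
by rewrite -ab mxtrace_mulC ba mxtrace1 Pr.
Qed.

Lemma Re_sum (R : rcfType) (I : finType) (F : I -> R[i]) :
  @complex.Re R (\sum_i F i) = \sum_i @complex.Re R (F i).
Proof.
apply: (big_morph (@complex.Re R)) => // x y.
by case: x; case: y.
Qed.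

Lemma Re_mulC (R : rcfType) (z : R[i]) (r : R) : @complex.Re R (z * r%:C) = complex.Re z * r.
Proof. by case: z => a b /=; rewrite mulr0 subr0. Qed.

Lemma adj_delta (R : rcfType) n p (i : 'I_n) (j : 'I_p) :
  adj (delta_mx i j : 'M[R[i]]_(n,p)) = delta_mx j i.
Proof.
by apply/matrixP => a b; rewrite adjE' !mxE rmorph_nat andbC.
Qed.

Lemma entry_delta (R : rcfType) n (A : 'M[R[i]]_n) j (z : 'I_1) :
  ((delta_mx z j : 'M_(1,n)) *m A *m (delta_mx j z : 'M_(n,1))) z z = A j j :> R[i].
Proof. by rewrite ord1 -rowE -colE !mxE. Qed.

Lemma tr_diag (R : rcfType) n (M : 'M[R[i]]_n) d :
  \tr (M *m diag_mx d) = \sum_j M j j * d 0 j.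
Proof. by apply: eq_bigr => j _; rewrite mul_mx_diag mxE. Qed.

Lemma density_conv (R : rcfType) m n (X : 'I_m -> 'M[R[i]]_n) (U : 'M[R[i]]_n) (lam : 'I_m -> 'I_n -> R) :
  U *m adj U = 1%:M -> adj U *m U = 1%:M ->
  (forall k, X k = adj U *m diag_mx (\row_j (lam k j)%:C) *m U) ->
  forall G, density_operator G -> conv (weight X) (iota_star X G).
Proof.
move=> UU UU' HX G [Gh [Gpsd Gtr]].
pose M := U *m G *m adj U.
exists n, (fun j => \row_k lam k j), (fun j => @complex.Re R (M j j)).
split; first by move=> j; exact: (@weight_lam R m n X U lam UU HX).
split; [|split].
- move=> j; have := Gpsd (adj U *m delta_mx j 0).
  rewrite adjM adjK adj_delta.
  have -> : (delta_mx 0 j : 'rV[R[i]]_n) *m U *m G *m (adj U *m (delta_mx j 0 : 'cV[R[i]]_n)) = (delta_mx 0 j : 'rV[R[i]]_n) *m M *m (delta_mx j 0 : 'cV[R[i]]_n).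
    by rewrite /M !mulmxA.
  rewrite entry_delta lecE => /andP[_].
  by [].
- rewrite -Re_sum.
  have -> : \sum_j M j j = \tr M by [].
  by rewrite /M mxtrace_mulC mulmxA UU' mul1mx Gtr.
- apply/rowP => k; rewrite !mxE summxE.
  rewrite HX !mulmxA mxtrace_mulC !mulmxA -/M tr_diag Re_sum.
  by apply: eq_bigr => j _; rewrite !mxE Re_mulC.
Qed.

Lemma conv_pure (R : rcfType) m n (X : 'I_m -> 'M[R[i]]_n) (U : 'M[R[i]]_n) (lam : 'I_m -> 'I_n -> R) :
  U *m adj U = 1%:M -> adj U *m U = 1%:M ->
  (forall k, X k = adj U *m diag_mx (\row_j (lam k j)%:C) *m U) ->
  forall x, conv (weight X) x -> exists P, pure_state P /\ iota_star X P = x.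
Proof.
move=> UU UU' HX x [K [p [t [pw [t0 [t1 ->]]]]]].
have := fun l => @weight_is_lam R m n X U lam UU UU' HX (p l) (pw l).
case/fin_all_exists => f Hf.
pose s j := \sum_(l | f l == j) t l.
have s0 j : 0 <= s j by apply: sumr_ge0 => l _.
have s1 : \sum_j s j = 1.
  by rewrite -t1 (partition_big f xpredT).
have xE : \sum_l t l *: p l = \sum_j s j *: \row_k lam k j.
  rewrite (partition_big f xpredT) //=; apply: eq_bigr => j _.
  rewrite /s scaler_suml; apply: eq_bigr => l /eqP <-.
  by rewrite Hf.
pose c : 'cV[R[i]]_n := \col_j (Num.sqrt (s j))%:C.
pose psi := adj U *m c.
have cc : adj c *m c = 1%:M.
  apply/matrixP => a b; rewrite !ord1 [RHS]mxE eqxx mulr1n mxE.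
  have -> : (1 : R[i]) = (\sum_j s j)%:C by rewrite s1.
  rewrite rmorph_sum.
  apply: eq_bigr => j _; rewrite adjE' !mxE conjc_real -rmorphM -expr2.
  by rewrite sqr_sqrtr.
have pp : adj psi *m psi = 1%:M.
  by rewrite /psi adjM adjK !mulmxA -(mulmxA _ U) UU mulmx1 cc.
have psi0 : psi != 0.
  apply/eqP => H; move: pp; rewrite H mulmx0 => /matrixP /(_ 0 0).
  by rewrite !mxE eqxx mulr1n => /eqP; rewrite eq_sym oner_eq0.
have psiE : psi = adj U *m c by [].
clearbody psi.
exists (psi *m adj psi); split.
  split; first by rewrite /is_hermitian adjM adjK.
  split; first by rewrite !mulmxA -(mulmxA psi) pp mulmx1.
  apply/eqP; rewrite eqn_leq (leq_trans (mxrankM_maxl _ _) (rank_leq_col _)) /=.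
  rewrite lt0n mxrank_eq0; apply: contra psi0 => /eqP H.
  by rewrite -(mulmx1 psi) -pp mulmxA H mul0mx.
apply/rowP => k; rewrite xE !mxE summxE.
rewrite -mulmxA mxtrace_mulC /mxtrace big_ord1 HX psiE adjM adjK !mulmxA.
rewrite -(mulmxA _ U (adj U)) UU mulmx1 -(mulmxA _ U (adj U)) UU mulmx1.
rewrite mxE Re_sum; apply: eq_bigr => j _.
rewrite mul_mx_diag !mxE conjc_real -!rmorphM /=.
by rewrite mulrAC -expr2 sqr_sqrtr.
Qed.

Theorem theorem4p5 (R : rcfType) (m n : nat) (X : 'I_m -> 'M[R[i]]_n)
  (W : 'M[R[i]]_n) :
  (forall k, is_hermitian (X k)) -> is_hermitian W -> abelian_theory X ->
  (forall x : 'rV[R]_m,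
     (exists P, pure_state P /\ iota_star X P = x) <-> conv (weight X) x) /\
  (forall x : 'rV[R]_m,
     (exists G, density_operator G /\ iota_star X G = x) <-> conv (weight X) x).
Proof.
move=> Xh Wh Xab.
have [U [lam [UU UU' HX]]] := @diag_basis R m n X Xh Xab.
have DC := @density_conv R m n X U lam UU UU' HX.
have CP := @conv_pure R m n X U lam UU UU' HX.
split => x; split.
- by case=> P [Pp <-]; apply: DC; apply: pure_density.
- exact: CP.
- by case=> G [Gd <-]; apply: DC.
- move/CP => [P [Pp <-]]; exists P; split => //; exact: pure_density.
Qed.
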